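(* There is no tiling of the sphere by angle congruent pentagons whose pentagon has five pairwise distinct angles $\alpha,\beta,\gamma,\delta,\epsilon$ and in which every vertex is of one of the types $\alpha\beta\gamma$, $\delta^3$, $\delta\epsilon^3$, with at least one vertex of type $\delta\epsilon^3$. In particular the anglewise vertex combination with $36$ tiles, $36$ vertices $\alpha\beta\gamma$, $8$ vertices $\delta^3$ and $12$ vertices $\delta\epsilon^3$ (with $\alpha+\beta+\gamma=2\pi$, $\delta=\frac{2}{3}\pi$, $\epsilon=\frac{4}{9}\pi$) is not realized by any angle congruent tiling.
   Context: A spherical tiling by angle congruent pentagons: embedded graph in the sphere, all faces pentagons, edge-to-edge, every vertex of degree $\ge3$; each corner carries a positive real angle; angles at each vertex sum to $2\pi$; all tiles have the same cyclic sequence of corner angles up to rotation and reflection. Type $\alpha\beta\gamma$: degree $3$ vertex with corner angles $\alpha,\beta,\gamma$; $\delta^3$: degree $3$ vertex with all corners $\delta$; $\delta\epsilon^3$: degree $4$ vertex with corners $\delta,\epsilon,\epsilon,\epsilon$. *)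

(* Defs.v *)
From Stdlib Require Import Reals List Permutation.
From mathcomp Require Import all_boot.

Set Implicit Arguments.
Unset Strict Implicit.
Unset Printing Implicit Defensive.

(* Tiles form a finite type T.  The corners ("darts") are the pairs (t, i)   *)
(* with i : 'I_5, listed in the cyclic order of the boundary of tile t, all  *)
(* tiles oriented coherently.  Side i of tile t joins corner i to corner     *)
(* i+1.  The gluing g : corner -> corner is a fixed-point-free involution    *)
(* sending side (t,i) to the side (t',k) of the neighbouring tile glued to   *)
(* it (traversed in the opposite direction).  The rotation around a vertex  *)
(* is then  vrot g = fnext \o g  and the vertices are its orbits.           *)

Notation corner T := (prod (Finite.sort T) (ordinal 5)).

Definition fnext (T : finType) (d : corner T) : corner T := (d.1, ordS d.2).

Definition vrot (T : finType) (g : corner T -> corner T) (d : corner T)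
  : corner T := fnext (g d).

(* the surface built from the pentagons is a sphere whose 1-skeleton has all
   vertices of degree >= 3 and in which every tile is a genuine pentagon
   (five distinct vertices). *)
Definition sphere_pentagon_tiling (T : finType) (g : corner T -> corner T) :=
  [/\ (forall d, g (g d) = d /\ g d <> d),
      (forall d d' : corner T,
         connect [rel x y | (y == g x) || (y == fnext x)] d d'),
      (* Euler characteristic 2 : V - E + F = 2 with E = 5F/2 *)
      (2 * (fcard (vrot g) (@predT (corner T)) + #|T|) = 5 * #|T| + 4)%N,
      (forall d, 3 <= order (vrot g) d)%N &
      (forall (t : T) (i j : 'I_5), i != j -> ~~ fconnect (vrot g) (t, i) (t, j))].

Definition vertex_angles (T : finType) (g : corner T -> corner T)
  (ang : corner T -> R) (d : corner T) : list R :=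
  map ang (orbit (vrot g) d).

Definition angle_assignment (T : finType) (g : corner T -> corner T)
  (ang : corner T -> R) :=
  (forall d, Rlt 0 (ang d)) /\
  (forall d, fold_right Rplus R0 (vertex_angles g ang d) = Rmult 2 PI).

(* angle congruence: every tile has the corner-angle sequence p, up to
   rotation and reflection *)
Definition angle_congruent (T : finType) (ang : corner T -> R)
  (p : 'I_5 -> R) :=
  forall t : T, exists (k : 'I_5) (r : bool), forall i : 'I_5,
    ang (t, i) = p (if r then inord ((k + (5 - i)) %% 5)
                         else inord ((k + i) %% 5)).

(* Main.v *)
Require Import Defs.
From Stdlib Require Import Reals List Permutation Classical.
From mathcomp Require Import all_boot.

Set Implicit Arguments.

Record base (X : Type) (N P G V : X -> X) (ang : X -> R) (A : R -> Prop)
  (d e : R) : Prop := {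
  gNP : forall u, N (P u) = u;
  gPN : forall u, P (N u) = u;
  gGG : forall u, G (G u) = u;
  gR : forall u, V u = N (G u);
  gN5 : forall u, N (N (N (N (N u)))) = u;
  gAd : ~ A d; gAe : ~ A e; gde : d <> e;
  gvtx : forall u,
    (V (V (V u)) = u /\ A (ang u) /\ A (ang (V u)) /\ A (ang (V (V u))) /\
      ang u <> ang (V u) /\ ang (V u) <> ang (V (V u)) /\ ang (V (V u)) <> ang u)
    \/ (V (V (V u)) = u /\ ang u = d /\ ang (V u) = d /\ ang (V (V u)) = d)
    \/ (V (V (V (V u))) = u /\
        ((ang u = d /\ ang (V u) = e /\ ang (V (V u)) = e /\ ang (V (V (V u))) = e)
      \/ (ang u = e /\ ang (V u) = d /\ ang (V (V u)) = e /\ ang (V (V (V u))) = e)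
      \/ (ang u = e /\ ang (V u) = e /\ ang (V (V u)) = d /\ ang (V (V (V u))) = e)
      \/ (ang u = e /\ ang (V u) = e /\ ang (V (V u)) = e /\ ang (V (V (V u))) = d)))
}.

Record good (X : Type) (N P : X -> X) (ang : X -> R) (A : R -> Prop)
  (x y z d e : R) : Prop := {
  gAx : A x; gAy : A y; gAz : A z;
  gA3 : forall v, A v -> v = x \/ v = y \/ v = z;
  gxy : x <> y; gxz : x <> z; gyz : y <> z;
  gLe : forall u, ang u = e -> (ang (P u) = x /\ ang (N u) = z) \/ (ang (P u) = z /\ ang (N u) = x);
  gLx : forall u, ang u = x -> (ang (P u) = e /\ ang (N u) = d) \/ (ang (P u) = d /\ ang (N u) = e);
  gLd : forall u, ang u = d -> (ang (P u) = x /\ ang (N u) = y) \/ (ang (P u) = y /\ ang (N u) = x);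
  gLy : forall u, ang u = y -> (ang (P u) = d /\ ang (N u) = z) \/ (ang (P u) = z /\ ang (N u) = d);
  gLz : forall u, ang u = z -> (ang (P u) = y /\ ang (N u) = e) \/ (ang (P u) = e /\ ang (N u) = y)
}.

Arguments base {X}.
Arguments good {X}.
Unset Implicit Arguments.

Section Local.
Variables (X : Type) (N P G V : X -> X) (ang : X -> R) (A : R -> Prop)
  (x y z d e : R).
Hypothesis Hb : base N P G V ang A d e.
Hypothesis H : good N P ang A x y z d e.

Lemma Rinj u v : V u = V v -> u = v.
Proof.
rewrite !(gR Hb) => E.
have E2 : P (N (G u)) = P (N (G v)) by rewrite E.
rewrite !(gPN Hb) in E2.
by rewrite -(gGG Hb u) E2 (gGG Hb).
Qed.

Lemma edge u : V (P (V u)) = N u.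
Proof. by rewrite (gR Hb u) (gPN Hb) (gR Hb) (gGG Hb). Qed.

Lemma xd : x <> d. Proof. intro E; apply (gAd Hb); rewrite <- E; apply (gAx H). Qed.
Lemma yd : y <> d. Proof. intro E; apply (gAd Hb); rewrite <- E; apply (gAy H). Qed.
Lemma zd : z <> d. Proof. intro E; apply (gAd Hb); rewrite <- E; apply (gAz H). Qed.
Lemma xe : x <> e. Proof. intro E; apply (gAe Hb); rewrite <- E; apply (gAx H). Qed.
Lemma ye : y <> e. Proof. intro E; apply (gAe Hb); rewrite <- E; apply (gAy H). Qed.
Lemma ze : z <> e. Proof. intro E; apply (gAe Hb); rewrite <- E; apply (gAz H). Qed.

Lemma pair_succ u : A (ang u) -> A (ang (V u)) /\ ang (V u) <> ang u.
Proof.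
intro Hu. destruct (gvtx Hb u) as [[_ [_ [h [_ [h' _]]]]]|[[_ [h _]]|[_ h]]].
- split; auto.
- rewrite h in Hu; destruct (gAd Hb Hu).
- destruct h as [[h _]|[[h _]|[[h _]|[h _]]]]; rewrite h in Hu;
   first [destruct (gAd Hb Hu) | destruct (gAe Hb Hu)].
Qed.

Lemma pair_pred u : A (ang (V u)) -> A (ang u) /\ ang u <> ang (V u).
Proof.
intro Hu. destruct (gvtx Hb (V u)) as [[h3 [_ [_ [h [_ [_ h']]]]]]|[[_ [h _]]|[_ h]]].
- assert (E : V (V (V u)) = u) by (apply Rinj; exact h3).
  rewrite E in h, h'. split; auto.
- rewrite h in Hu; destruct (gAd Hb Hu).
- destruct h as [[h _]|[[h _]|[[h _]|[h _]]]]; rewrite h in Hu;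
   first [destruct (gAd Hb Hu) | destruct (gAe Hb Hu)].
Qed.

Lemma vd u : ang u = d ->
  (V (V (V u)) = u /\ ang (V u) = d /\ ang (V (V u)) = d) \/
  (V (V (V (V u))) = u /\ ang (V u) = e /\ ang (V (V u)) = e /\ ang (V (V (V u))) = e).
Proof.
intro Hu. pose proof (gde Hb) as de. destruct (gvtx Hb u) as [[_ [h _]]|[[h3 [_ h]]|[h4 h]]].
- rewrite Hu in h; destruct (gAd Hb h).
- left; tauto.
- right; split; [exact h4|].
  destruct h as [h|[h|[h|h]]]; try tauto; exfalso; apply de; rewrite <- Hu; tauto.
Qed.

Lemma ve u : ang u = e ->
  V (V (V (V u))) = u /\
  ((ang (V u) = d /\ ang (V (V u)) = e /\ ang (V (V (V u))) = e)
   \/ (ang (V u) = e /\ ang (V (V u)) = d /\ ang (V (V (V u))) = e)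
   \/ (ang (V u) = e /\ ang (V (V u)) = e /\ ang (V (V (V u))) = d)).
Proof.
intro Hu. pose proof (gde Hb) as de. destruct (gvtx Hb u) as [[_ [h _]]|[[h3 [h _]]|[h4 h]]].
- rewrite Hu in h; destruct (gAe Hb h).
- exfalso; apply de; rewrite <- h; auto.
- split; [exact h4|].
  destruct h as [h|[h|[h|h]]]; try tauto; exfalso; apply de; destruct h as [h' _]; rewrite <- h'; exact Hu.
Qed.

Lemma abc u : A (ang u) -> V (V (V u)) = u /\ A (ang (V u)) /\ A (ang (V (V u))) /\
      ang u <> ang (V u) /\ ang (V u) <> ang (V (V u)) /\ ang (V (V u)) <> ang u.
Proof.
intro Hu. destruct (gvtx Hb u) as [h|[[_ [h _]]|[_ h]]].
- tauto.
- rewrite h in Hu; destruct (gAd Hb Hu).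
- destruct h as [[h _]|[[h _]|[[h _]|[h _]]]]; rewrite h in Hu;
   first [destruct (gAd Hb Hu) | destruct (gAe Hb Hu)].
Qed.


Lemma N2P3 w : N (N w) = P (P (P w)).
Proof. by rewrite -{2}(gN5 Hb w) !(gPN Hb). Qed.

Lemma E2d e1 s : ang e1 = e -> V e1 = s -> ang s = e -> ang (P s) = x ->
  ang (P (P s)) = d /\ ang (V (P (P s))) = d.
Proof.
move=> He1 Hv Hs Hps.
have E1 : V (P s) = N e1 by rewrite -Hv edge.
have [A1 n1] := pair_succ (P s) (eq_ind_r A (gAx H) Hps).
rewrite E1 Hps in A1 n1.
have Hz1 : ang (N e1) = z.
  destruct (gLe H e1 He1) as [[h1 h2]|[h1 h2]]; [exact h2| contradiction].
have [h3 [_ [Aq [_ [nq1 nq2]]]]] := abc (P s) (eq_ind_r A (gAx H) Hps).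
rewrite E1 in h3 Aq nq1 nq2. rewrite Hps in nq2. rewrite Hz1 in nq1.
set q := V (N e1) in h3 Aq nq1 nq2.
have Hq : ang q = y.
  destruct (gA3 H _ Aq) as [h|[h|h]]; [by case: nq2 | exact h | by case: nq1].
have HNz : ang (N (N e1)) = y.
  destruct (gLz H (N e1) Hz1) as [[h1 h2]|[h1 h2]]; last by [].
  rewrite (gPN Hb) He1 in h1. by case: ye; rewrite h1.
have E2 : V (P q) = N (N e1) by rewrite /q edge.
have [Apq _] := pair_pred (P q) (eq_ind_r A (gAy H) (eq_trans (f_equal ang E2) HNz)).
have HNq : ang (N q) = d.
  destruct (gLy H q Hq) as [[h1 h2]|[h1 h2]]; [rewrite h1 in Apq; by case: (gAd Hb)| exact h2].
have E3 : V (P (P s)) = N q by rewrite -edge /q h3.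
split.
- destruct (gLx H (P s) Hps) as [[h1 h2]|[h1 h2]]; last by [].
  rewrite (gNP Hb) Hs in h2. by case: (gde Hb).
- by rewrite E3.
Qed.

Lemma E1e dl s : ang dl = d -> V dl = s -> ang s = e -> ang (P s) = x ->
  ang (V (P (P s))) = e.
Proof.
move=> Hd Hv Hs Hps.
have E1 : V (P s) = N dl by rewrite -Hv edge.
have [A1 n1] := pair_succ (P s) (eq_ind_r A (gAx H) Hps).
rewrite E1 Hps in A1 n1.
have Hy1 : ang (N dl) = y.
  destruct (gLd H dl Hd) as [[h1 h2]|[h1 h2]]; [exact h2| contradiction].
have [h3 [_ [Aq [_ [nq1 nq2]]]]] := abc (P s) (eq_ind_r A (gAx H) Hps).
rewrite E1 in h3 Aq nq1 nq2. rewrite Hps in nq2. rewrite Hy1 in nq1.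
set q := V (N dl) in h3 Aq nq1 nq2.
have Hq : ang q = z.
  destruct (gA3 H _ Aq) as [h|[h|h]]; [by case: nq2 | by case: nq1 | exact h].
have HNz : ang (N (N dl)) = z.
  destruct (gLy H (N dl) Hy1) as [[h1 h2]|[h1 h2]]; first by [].
  rewrite (gPN Hb) Hd in h1. by case: zd; rewrite h1.
have E2 : V (P q) = N (N dl) by rewrite /q edge.
have [Apq _] := pair_pred (P q) (eq_ind_r A (gAz H) (eq_trans (f_equal ang E2) HNz)).
have HNq : ang (N q) = e.
  destruct (gLz H q Hq) as [[h1 h2]|[h1 h2]]; [exact h2 | rewrite h1 in Apq; by case: (gAe Hb)].
have E3 : V (P (P s)) = N q by rewrite -edge /q h3.
by rewrite E3.
Qed.

Definition cc w := ang (V (N (N w))) = d.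

Lemma step u : ang u = d -> ang (V u) = d -> ang (N u) = x ->
  ang (N (V u)) = x /\ (cc (V u) <-> ~ cc u).
Proof.
move=> Hu Hu' Hnu.
have Hpu : ang (P u) = y.
  destruct (gLd H u Hu) as [[h1 h2]|[h1 h2]]; last exact h1.
  by case: (gxy H); rewrite -Hnu h2.
have E1 : V (P (V u)) = N u := edge u.
have [Apu' npu'] := pair_pred (P (V u)) (eq_ind_r A (gAx H) (eq_trans (f_equal ang E1) Hnu)).
rewrite E1 Hnu in npu'.
have [Hpy Hnx] : ang (P (V u)) = y /\ ang (N (V u)) = x.
  destruct (gLd H (V u) Hu') as [[h1 h2]|[h1 h2]]; [contradiction | by split].
split; first exact Hnx.
set Y := P (V u) in E1 Apu' npu' Hpy Hnx.
set Xc := N u in E1 Hnu.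
have [h3 [As [_ [ns1 [ns2 _]]]]] := abc Xc (eq_ind_r A (gAx H) Hnu).
set s := V Xc in h3 As ns1 ns2.
have Vs : V s = Y by apply: Rinj; rewrite E1 /s h3.
rewrite Vs Hnu Hpy in ns1 ns2.
have Hsz : ang s = z.
  destruct (gA3 H _ As) as [h|[h|h]]; [by case: ns1 | by case: ns2 | exact h].
have HPY : ang (P Y) = z.
  destruct (gLy H Y Hpy) as [[h1 h2]|[h1 h2]]; last exact h1.
  rewrite /Y (gNP Hb) Hu' in h2. by case: zd.
have E2 : V (P Y) = N s by rewrite -Vs edge.
have [ANs nNs] := pair_succ (P Y) (eq_ind_r A (gAz H) HPY).
rewrite E2 HPY in ANs nNs.
have [HPs HNs] : ang (P s) = e /\ ang (N s) = y.
  destruct (gLz H s Hsz) as [[h1 h2]|[h1 h2]]; last by split.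
  rewrite h2 in ANs. by case: (gAe Hb).
have E3 : V (P s) = N Xc by rewrite /s edge.
have HNX : ang (N Xc) = e.
  destruct (gLx H Xc Hnu) as [[h1 h2]|[h1 h2]]; last exact h2.
  rewrite /Xc (gPN Hb) Hu in h1. by case: (gde Hb).
set Z' := P Y in HPY E2.
set Y' := N s in ANs nNs HNs E2.
have [h3' [_ [Ar [_ [nr1 nr2]]]]] := abc Z' (eq_ind_r A (gAz H) HPY).
rewrite E2 HNs HPY in h3' Ar nr1 nr2.
set r := V Y' in h3' Ar nr1 nr2.
have Hrx : ang r = x.
  destruct (gA3 H _ Ar) as [h|[h|h]]; [exact h| by case: nr1; rewrite h | by case: nr2].
have Vr : V r = Z' := h3'.
have HPZ : ang (P Z') = e.
  destruct (gLz H Z' HPY) as [[h1 h2]|[h1 h2]]; last exact h1.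
  rewrite /Z' /Y (gNP Hb) Hpy in h2. by case: ye.
have E4 : V (P Z') = N r by rewrite -Vr edge.
have ccu' : cc (V u) <-> ang (N r) = d.
  by rewrite /cc N2P3 -/Y -/Z' E4.
have HNY' : ang (N Y') = d.
  destruct (gLy H Y' HNs) as [[h1 h2]|[h1 h2]]; last exact h2.
  rewrite /Y' (gPN Hb) Hsz in h1. by case: zd.
have E5 : V (P r) = N Y' by rewrite /r edge.
have HPs' : ang (P (P s)) = x.
  destruct (gLe H (P s) HPs) as [[h1 h2]|[h1 h2]]; first exact h1.
  rewrite (gNP Hb) Hsz in h2. by case: (gxz H).
have Eom : P (P (P s)) = N Y' by rewrite /Y' N2P3.
have ccu : cc u <-> ang (V (V (P s))) = d by rewrite /cc E3.
rewrite ccu ccu'.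
have [h4 pat] := ve (P s) HPs.
have HVe : ang (V (P s)) = e by rewrite E3.
destruct pat as [[p1 _]|[[_ [p2 p3]]|[_ [p2 p3]]]]; first by case: (gde Hb); rewrite -p1.
-
  have [_ hV] := E2d (V (V (V (P s)))) (P s) p3 (h4) HPs HPs'.
  rewrite Eom in hV.
  have HPr : ang (P r) = d.
    destruct (gLx H r Hrx) as [[h1 h2]|[h1 h2]]; last exact h1.
    have [_ pat'] := ve (P r) h1. rewrite E5 HNY' in pat'.
    rewrite hV in pat'.
    destruct pat' as [[_ [q1 _]]|[[q1 _]|[q1 _]]]; case: (gde Hb); by [rewrite q1 | rewrite -q1].
  have HNr : ang (N r) = e.
    destruct (gLx H r Hrx) as [[h1 h2]|[h1 h2]]; last exact h2.
    rewrite HPr in h1. by case: (gde Hb).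
  rewrite HNr p2. split; [move=> h; case: (gde Hb); by rewrite h | move=> hn; by case: hn].
-
  have hV := E1e (V (V (V (P s)))) (P s) p3 h4 HPs HPs'.
  rewrite Eom in hV.
  have HPr : ang (P r) = e.
    destruct (gLx H r Hrx) as [[h1 h2]|[h1 h2]]; first exact h1.
    case: (vd (P r) h1) => [[_ [_ q2]]|[_ [q1 _]]].
    + rewrite E5 hV in q2. by case: (gde Hb).
    + rewrite E5 HNY' in q1. by case: (gde Hb).
  have HNr : ang (N r) = d.
    destruct (gLx H r Hrx) as [[h1 h2]|[h1 h2]]; first exact h2.
    rewrite HPr in h1. by case: (gde Hb).
  rewrite HNr p2. split; [move=> _ h; case: (gde Hb); by rewrite h | by move=> _].
Qed.


Lemma no_ddd_x u : ang u = d -> ang (V u) = d -> ang (N u) = x -> False.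
Proof.
move=> h0 h1 hn.
case: (vd u h0) => [[h3 [_ h2]]|[_ [h _]]]; last first.
  apply: (gde Hb). rewrite -h1. exact h.
have [n1 c1] := step u h0 h1 hn.
have [n2 c2] := step (V u) h1 h2 n1.
have h3' : ang (V (V (V u))) = d by rewrite h3.
have [_ c3] := step (V (V u)) h2 h3' n2.
rewrite h3 in c3.
destruct (classic (cc u)); tauto.
Qed.

Lemma deee_z dl : ang (V dl) = e -> ang (V (V dl)) = e ->
  ang (N (V (V dl))) = z -> exists w, ang w = d /\ ang (V w) = d.
Proof.
move=> h1 h2 hz.
have hp : ang (P (V (V dl))) = x.
  destruct (gLe H _ h2) as [[a1 a2]|[a1 a2]]; first exact a1.
  case: (gxz H). by rewrite -a2.
have [a1 a2] := E2d (V dl) (V (V dl)) h1 erefl h2 hp.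
by exists (P (P (V (V dl)))).
Qed.

End Local.

Section Case1.
Variables (X : Type) (N P G V : X -> X) (ang : X -> R) (A : R -> Prop)
  (d e q : R).
Hypothesis Hb : base N P G V ang A d e.
Hypothesis Aq : A q.
Hypothesis Hdq : d <> q.
Hypothesis Le1 : forall u, ang u = e ->
  (ang (P u) = d /\ ang (N u) = q) \/ (ang (P u) = q /\ ang (N u) = d).

Lemma ee3 u : ang u = e -> ang (V u) = e -> ang (V (V u)) = e -> False.
Proof.
move=> h0 h1 h2.
have E1 := edge X N P G V ang A d e Hb u.
have c1 : ang (P (V u)) = d.
  destruct (Le1 _ h1) as [[a1 a2]|[a1 a2]]; first exact a1.
  have [An nn] := pair_succ X N P G V ang A d e Hb (P (V u)) (eq_ind_r A Aq a1).
  rewrite E1 a1 in An nn.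
  destruct (Le1 _ h0) as [[b1 b2]|[b1 b2]]; first by case: nn.
  rewrite b2 in An. by case: (gAd Hb).
have E2 := edge X N P G V ang A d e Hb (V u).
have c2 : ang (N (V u)) = d.
  destruct (Le1 _ h1) as [[a1 a2]|[a1 a2]]; last exact a2.
  have [An nn] := pair_pred X N P G V ang A d e Hb (P (V (V u))) (eq_ind_r A Aq (eq_trans (f_equal ang E2) a2)).
  rewrite E2 a2 in nn.
  destruct (Le1 _ h2) as [[b1 b2]|[b1 b2]]; last by case: nn.
  rewrite b1 in An. by case: (gAd Hb).
destruct (Le1 _ h1) as [[a1 a2]|[a1 a2]].
- apply: Hdq. by rewrite -c2 a2.
- apply: Hdq. by rewrite -c1 a1.
Qed.

Lemma case1 w : ang w = e -> False.
Proof.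
move=> h0.
have [h4 pat] := ve X N P G V ang A d e Hb w h0.
destruct pat as [[p1 [p2 p3]]|[[p1 [p2 p3]]|[p1 [p2 p3]]]].
- apply: (ee3 (V (V w))) => //. by rewrite h4.
- apply: (ee3 (V (V (V w)))) => //; by rewrite h4.
- exact: (ee3 w).
Qed.

End Case1.

Lemma base_rev X N P G V ang A d e : @base X N P G V ang A d e ->
  base P N (fun u => N (G (P u))) (fun u => G (P u)) ang A d e.
Proof.
move=> Hb.
have VV' : forall w, G (P (V w)) = w.
  move=> w. by rewrite (gR Hb) (gPN Hb) (gGG Hb).
have V'V : forall w, V (G (P w)) = w.
  move=> w. by rewrite (gR Hb) (gGG Hb) (gNP Hb).
split.
- exact: (gPN Hb).
- exact: (gNP Hb).
- move=> u. by rewrite (gPN Hb) (gGG Hb) (gNP Hb).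
- move=> u. by rewrite (gPN Hb).
- move=> u. by rewrite -{1}(gN5 Hb u) !(gPN Hb).
- exact: (gAd Hb).
- exact: (gAe Hb).
- exact: (gde Hb).
- move=> u.
  case: (gvtx Hb u) => [[h3 hh]|[[h3 hh]|[h4 hh]]].
  + have e1 : G (P u) = V (V u) by rewrite -{1}h3 VV'.
    have e2 : G (P (V (V u))) = V u by rewrite VV'.
    have e3 : G (P (V u)) = u by rewrite VV'.
    left. rewrite e1 e2 e3. case: hh => [a1 [a2 [a3 [n1 [n2 n3]]]]]. repeat split; auto; intro E; first [apply n1|apply n2|apply n3]; symmetry; exact E.
  + have e1 : G (P u) = V (V u) by rewrite -{1}h3 VV'.
    have e2 : G (P (V (V u))) = V u by rewrite VV'.
    have e3 : G (P (V u)) = u by rewrite VV'.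
    right; left. rewrite e1 e2 e3. tauto.
  + have e1 : G (P u) = V (V (V u)) by rewrite -{1}h4 VV'.
    have e2 : G (P (V (V (V u)))) = V (V u) by rewrite VV'.
    have e3 : G (P (V (V u))) = V u by rewrite VV'.
    have e4 : G (P (V u)) = u by rewrite VV'.
    right; right. rewrite e1 e2 e3 e4. split; first by [].
    tauto.
Qed.

Lemma good_rev X N P ang A x y z d e : @good X N P ang A x y z d e ->
  good P N ang A x y z d e.
Proof.
move=> H. split; try solve [exact: (gAx H)|exact: (gAy H)|exact: (gAz H)|exact: (gA3 H)|
  exact: (gxy H)|exact: (gxz H)|exact: (gyz H)].
- move=> u h; destruct (gLe H u h); tauto.
- move=> u h; destruct (gLx H u h); tauto.
- move=> u h; destruct (gLd H u h); tauto.
- move=> u h; destruct (gLy H u h); tauto.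
- move=> u h; destruct (gLz H u h); tauto.
Qed.

Arguments base_rev {X N P G V ang A d e}.
Arguments good_rev {X N P ang A x y z d e}.
Lemma VV'_lem X N P G V ang A d e (Hb : @base X N P G V ang A d e) w :
  G (P (V w)) = w.
Proof. by rewrite (gR Hb) (gPN Hb) (gGG Hb). Qed.
Arguments VV'_lem {X N P G V ang A d e} Hb w.

Lemma no_ddd X N P G V ang A x y z d e (Hb : @base X N P G V ang A d e)
  (H : good N P ang A x y z d e) u : ang u = d -> ang (V u) = d -> False.
Proof.
move=> h0 h1.
destruct (gLd H u h0) as [[a1 a2]|[a1 a2]].
- case: (vd X N P G V ang A d e Hb u h0) => [[h3 [_ h2]]|[_ [h _]]]; last first.
    apply: (gde Hb). rewrite -h1. exact h.
  apply: (no_ddd_x X P N _ (fun w => G (P w)) ang A x y z d e (base_rev Hb) (good_rev H) u h0) => //.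
  by rewrite -{1}h3 (VV'_lem Hb).
- exact: (no_ddd_x X N P G V ang A x y z d e Hb H u h0 h1).
Qed.

Lemma no_d X N P G V ang A x y z d e (Hb : @base X N P G V ang A d e)
  (H : good N P ang A x y z d e) u : ang u = d -> False.
Proof.
move=> h0.
case: (vd X N P G V ang A d e Hb u h0) => [[h3 [h1 _]]|[h4 [h1 [h2 h3]]]].
  exact: (no_ddd X N P G V ang A x y z d e Hb H u h0 h1).
destruct (gLe H _ h2) as [[a1 a2]|[a1 a2]].
- have [w [w1 w2]] := deee_z X N P G V ang A x y z d e Hb H u h1 h2 a2.
  exact: (no_ddd X N P G V ang A x y z d e Hb H w w1 w2).
- have e1 : G (P u) = V (V (V u)) by rewrite -{1}h4 (VV'_lem Hb).
  have e2 : G (P (V (V (V u)))) = V (V u) by rewrite (VV'_lem Hb).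
  have f1 : ang (G (P u)) = e by rewrite e1.
  have f2 : ang (G (P (G (P u)))) = e by rewrite e1 e2.
  have f3 : ang (P (G (P (G (P u))))) = z by rewrite e1 e2.
  have [w [w1 w2]] := deee_z X P N _ (fun w => G (P w)) ang A x y z d e (base_rev Hb) (good_rev H) u f1 f2 f3.
  exact: (no_ddd X P N _ (fun w => G (P w)) ang A x y z d e (base_rev Hb) (good_rev H) w w1 w2).
Qed.
Definition fprev (T : finType) (u : corner T) : corner T := (u.1, ord_pred u.2).

Definition qv (p : 'I_5 -> R) (k : nat) : R := p (inord k).

Definition Pent (X : Type) (N P : X -> X) (ang : X -> R) (q0 q1 q2 q3 q4 : R) :=
  forall u,
   (ang u = q0 /\ ((ang (P u) = q4 /\ ang (N u) = q1) \/ (ang (P u) = q1 /\ ang (N u) = q4))) \/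
   (ang u = q1 /\ ((ang (P u) = q0 /\ ang (N u) = q2) \/ (ang (P u) = q2 /\ ang (N u) = q0))) \/
   (ang u = q2 /\ ((ang (P u) = q1 /\ ang (N u) = q3) \/ (ang (P u) = q3 /\ ang (N u) = q1))) \/
   (ang u = q3 /\ ((ang (P u) = q2 /\ ang (N u) = q4) \/ (ang (P u) = q4 /\ ang (N u) = q2))) \/
   (ang u = q4 /\ ((ang (P u) = q3 /\ ang (N u) = q0) \/ (ang (P u) = q0 /\ ang (N u) = q3))).

Arguments Pent {X}.

Lemma pent_conc (T : finType) (ang : corner T -> R) (p : 'I_5 -> R) :
  angle_congruent ang p ->
  Pent (@fnext T) (@fprev T) ang (qv p 0) (qv p 1) (qv p 2) (qv p 3) (qv p 4).
Proof.
move=> Hc [t i]. have [k [r Hk]] := Hc t.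
rewrite /fnext /fprev /qv /= !Hk; clear Hk.
case: r; case: k => [[|[|[|[|[|k]]]]] Hk'] //; case: i => [[|[|[|[|[|i]]]]] Hi] //;
  repeat (first [ left; split; [reflexivity | first [left; split; reflexivity | right; split; reflexivity]] | split; [reflexivity | first [left; split; reflexivity | right; split; reflexivity]] | right ]).
Qed.

Lemma nodup5 (v0 v1 v2 v3 v4 : R) : NoDup [:: v0;v1;v2;v3;v4] ->
  v0 <> v1 /\ v0 <> v2 /\ v0 <> v3 /\ v0 <> v4 /\ v1 <> v2 /\ v1 <> v3 /\ v1 <> v4 /\
  v2 <> v3 /\ v2 <> v4 /\ v3 <> v4.
Proof.
move=> H.
apply NoDup_cons_iff in H as [n0 H]. apply NoDup_cons_iff in H as [n1 H].
apply NoDup_cons_iff in H as [n2 H]. apply NoDup_cons_iff in H as [n3 H].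
simpl in n0, n1, n2, n3.
repeat split; intro E; subst; tauto.
Qed.

Lemma pent_rot X (N P : X -> X) ang q0 q1 q2 q3 q4 :
  Pent N P ang q0 q1 q2 q3 q4 -> Pent N P ang q1 q2 q3 q4 q0.
Proof. move=> H u. have := H u. tauto. Qed.

Lemma pent_false X N P G V ang a b c d e q1 q2 q3 q4
  (Hb : base N P G V ang (fun v => v = a \/ v = b \/ v = c) d e)
  (Hp : @Pent X N P ang e q1 q2 q3 q4)
  (Hnd : NoDup [:: e;q1;q2;q3;q4]) (Hnd' : NoDup [:: a;b;c;d;e])
  (Hs1 : forall v, In v [:: a;b;c;d;e] -> In v [:: e;q1;q2;q3;q4])
  (Hs2 : forall v, In v [:: e;q1;q2;q3;q4] -> In v [:: a;b;c;d;e])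
  (ud : X) (Hud : ang ud = d) (ue : X) (Hue : ang ue = e) : False.
Proof.
have [n01 [n02 [n03 [n04 [n12 [n13 [n14 [n23 [n24 n34]]]]]]]]] := nodup5 _ _ _ _ _ Hnd.
have [m01 [m02 [m03 [m04 [m12 [m13 [m14 [m23 [m24 m34]]]]]]]]] := nodup5 _ _ _ _ _ Hnd'.
have h1 := Hs2 q1. have h2 := Hs2 q2. have h3 := Hs2 q3. have h4 := Hs2 q4.
have hd := Hs1 d. have ha := Hs1 a. have hb := Hs1 b. have hc := Hs1 c.
simpl in h1, h2, h3, h4, hd, ha, hb, hc.
have {}h1 := h1 (or_intror (or_introl erefl)).
have {}h2 := h2 (or_intror (or_intror (or_introl erefl))).
have {}h3 := h3 (or_intror (or_intror (or_intror (or_introl erefl)))).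
have {}h4 := h4 (or_intror (or_intror (or_intror (or_intror (or_introl erefl))))).
have {}hd := hd (or_intror (or_intror (or_intror (or_introl erefl)))).
have {}ha := ha (or_introl erefl).
have {}hb := hb (or_intror (or_introl erefl)).
have {}hc := hc (or_intror (or_intror (or_introl erefl))).
Ltac solveA h := let E := fresh "E" in destruct h as [E|[E|[E|[E|[E|[]]]]]];
  first [ left; congruence | right; left; congruence | right; right; congruence | exfalso; congruence].
Ltac lab Hp := let u := fresh "u" in let hu := fresh "hu" in let h0 := fresh "h0" in
  let hh := fresh "hh" in let p1 := fresh "p1" in let p2 := fresh "p2" in
  intros u hu; destruct (Hp u) as [[h0 hh]|[[h0 hh]|[[h0 hh]|[[h0 hh]|[h0 hh]]]]];
  first [ exfalso; congruence
        | destruct hh as [[p1 p2]|[p1 p2]]; first [left; split; congruence | right; split; congruence]].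
have Hd' : exists u0, ang u0 = d by exists ud.
clear Hud.
destruct hd as [E|[E|[E|[E|[E|[]]]]]].
- by case: m34.
- subst d.
  have Aq : q4 = a \/ q4 = b \/ q4 = c by solveA h4.
  have Le1 : forall u, ang u = e ->
      (ang (P u) = q1 /\ ang (N u) = q4) \/ (ang (P u) = q4 /\ ang (N u) = q1) by lab Hp.
  exact: (case1 X N P G V ang _ q1 e q4 Hb Aq n14 Le1 ue Hue).
- subst d.
  have Hg : good N P ang (fun v => v = a \/ v = b \/ v = c) q1 q3 q4 q2 e.
    { split; try (by []); try (apply: nesym; assumption); try solve [solveA h1 | solveA h3 | solveA h4]; try (lab Hp);
    try (move=> v [Ev|[Ev|Ev]]; subst v;
     [destruct ha as [E2|[E2|[E2|[E2|[E2|[]]]]]] | destruct hb as [E2|[E2|[E2|[E2|[E2|[]]]]]] |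
      destruct hc as [E2|[E2|[E2|[E2|[E2|[]]]]]]];
     first [ left; congruence | right; left; congruence | right; right; congruence | exfalso; congruence]). }
  case: Hd' => u0 hu0. exact: (no_d X N P G V ang _ q1 q3 q4 q2 e Hb Hg u0 hu0).
- subst d.
  have Hg : good N P ang (fun v => v = a \/ v = b \/ v = c) q4 q2 q1 q3 e.
    { split; try (by []); try (apply: nesym; assumption); try solve [solveA h1 | solveA h2 | solveA h4]; try (lab Hp);
    try (move=> v [Ev|[Ev|Ev]]; subst v;
     [destruct ha as [E2|[E2|[E2|[E2|[E2|[]]]]]] | destruct hb as [E2|[E2|[E2|[E2|[E2|[]]]]]] |
      destruct hc as [E2|[E2|[E2|[E2|[E2|[]]]]]]];
     first [ left; congruence | right; left; congruence | right; right; congruence | exfalso; congruence]). }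
  case: Hd' => u0 hu0. exact: (no_d X N P G V ang _ q4 q2 q1 q3 e Hb Hg u0 hu0).
- subst d.
  have Aq : q1 = a \/ q1 = b \/ q1 = c by solveA h1.
  have Le1 : forall u, ang u = e ->
      (ang (P u) = q4 /\ ang (N u) = q1) \/ (ang (P u) = q1 /\ ang (N u) = q4) by lab Hp.
  exact: (case1 X N P G V ang _ q4 e q1 Hb Aq (nesym n14) Le1 ue Hue).
Qed.
Lemma enum5 (p : 'I_5 -> R) : map p (enum 'I_5) = [:: qv p 0; qv p 1; qv p 2; qv p 3; qv p 4].
Proof.
have -> : enum 'I_5 = [:: inord 0; inord 1; inord 2; inord 3; inord 4].
  apply: (inj_map val_inj). rewrite val_enum_ord /=. by rewrite !inordK.
by [].
Qed.

Lemma N5 (T : finType) (u : corner T) : fnext (fnext (fnext (fnext (fnext u)))) = u.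
Proof.
case: u => t [[|[|[|[|[|i]]]]] Hi] //; rewrite /fnext /=; congr pair; by apply: val_inj.
Qed.

Lemma length_size (A : Type) (l : list A) : length l = size l.
Proof. by elim: l => //= x l ->. Qed.

Lemma In_map_seq (A B : Type) (f : A -> B) (l : list A) y :
  In y (map f l) -> exists x, f x = y.
Proof.
elim: l => //= x l IH [E|H]; first by exists x.
exact: IH.
Qed.

Lemma perm3A (a b c l1 l2 l3 : R) : NoDup [:: a; b; c] ->
  Permutation [:: l1; l2; l3] [:: a; b; c] ->
  (l1 = a \/ l1 = b \/ l1 = c) /\ (l2 = a \/ l2 = b \/ l2 = c) /\
  (l3 = a \/ l3 = b \/ l3 = c) /\ l1 <> l2 /\ l2 <> l3 /\ l3 <> l1.
Proof.
move=> Hn Hp.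
have Hin : forall v, In v [:: l1; l2; l3] -> In v [:: a; b; c] := fun v => Permutation_in v Hp.
have nd := Permutation_NoDup (Permutation_sym Hp) Hn.
apply NoDup_cons_iff in nd as [n1 nd]. apply NoDup_cons_iff in nd as [n2 _].
simpl in n1, n2.
have i1 := Hin l1. have i2 := Hin l2. have i3 := Hin l3. simpl in i1, i2, i3.
split; first by intuition.
split; first by intuition.
split; first by intuition.
split; first by move=> E; apply: n1; left.
split; first by move=> E; apply: n2; left.
by move=> E; apply: n1; right; left.
Qed.

Lemma perm3d (d l1 l2 l3 : R) : Permutation [:: l1; l2; l3] [:: d; d; d] ->
  l1 = d /\ l2 = d /\ l3 = d.
Proof.
move=> Hp.
have Hin : forall v, In v [:: l1; l2; l3] -> In v [:: d; d; d] := fun v => Permutation_in v Hp.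
have i1 := Hin l1. have i2 := Hin l2. have i3 := Hin l3. simpl in i1, i2, i3.
intuition.
Qed.

Lemma allE (e : R) L : Permutation [:: e; e; e] L -> forall v, In v L -> v = e.
Proof.
move=> Hp v Hv. have := Permutation_in v (Permutation_sym Hp) Hv. simpl. intuition.
Qed.

Lemma perm4 (d e l1 l2 l3 l4 : R) : d <> e ->
  Permutation [:: l1; l2; l3; l4] [:: d; e; e; e] ->
      (l1 = d /\ l2 = e /\ l3 = e /\ l4 = e)
   \/ (l1 = e /\ l2 = d /\ l3 = e /\ l4 = e)
   \/ (l1 = e /\ l2 = e /\ l3 = d /\ l4 = e)
   \/ (l1 = e /\ l2 = e /\ l3 = e /\ l4 = d).
Proof.
move=> de Hp.
have Hs := Permutation_sym Hp.
have := Permutation_in d Hs (or_introl erefl). simpl.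
case=> [E|[E|[E|[E|[]]]]]; subst.
- have H := allE _ _ (Permutation_cons_inv Hs). simpl in H. left. intuition.
- have H := allE _ _ (Permutation_cons_app_inv [:: l1] [:: l3; l4] Hs). simpl in H. right; left. intuition.
- have H := allE _ _ (Permutation_cons_app_inv [:: l1; l2] [:: l4] Hs). simpl in H. right; right; left. intuition.
- have H := allE _ _ (Permutation_cons_app_inv [:: l1; l2; l3] [::] Hs). simpl in H. right; right; right. intuition.
Qed.

Lemma cfg_rot X (N P : X -> X) ang (a b c d e q0 q1 q2 q3 q4 : R) :
  Pent N P ang q0 q1 q2 q3 q4 -> NoDup [:: q0; q1; q2; q3; q4] ->
  (forall v, In v [:: a; b; c; d; e] -> In v [:: q0; q1; q2; q3; q4]) ->
  (forall v, In v [:: q0; q1; q2; q3; q4] -> In v [:: a; b; c; d; e]) ->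
  Pent N P ang q1 q2 q3 q4 q0 /\ NoDup [:: q1; q2; q3; q4; q0] /\
  (forall v, In v [:: a; b; c; d; e] -> In v [:: q1; q2; q3; q4; q0]) /\
  (forall v, In v [:: q1; q2; q3; q4; q0] -> In v [:: a; b; c; d; e]).
Proof.
move=> Hp Hn H1 H2.
split; first exact: pent_rot.
split.
  apply: (Permutation_NoDup _ Hn).
  exact: (Permutation_app_comm [:: q0] [:: q1; q2; q3; q4]).
split.
  move=> v hv. have := H1 v hv. simpl. tauto.
move=> v hv. apply: H2. move: hv. simpl. tauto.
Qed.

Arguments pent_false {X N P G V ang a b c d e q1 q2 q3 q4} Hb Hp Hnd Hnd' Hs1 Hs2 {ud} Hud {ue} Hue.
Arguments cfg_rot {X N P ang a b c d e q0 q1 q2 q3 q4}.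

Lemma final5 X N P G V ang a b c d e q0 q1 q2 q3 q4
  (Hb : base N P G V ang (fun v => v = a \/ v = b \/ v = c) d e)
  (Hnd' : NoDup [:: a;b;c;d;e])
  (ud : X) (Hud : ang ud = d) (ue : X) (Hue : ang ue = e) :
  Pent N P ang q0 q1 q2 q3 q4 -> NoDup [:: q0; q1; q2; q3; q4] ->
  (forall v, In v [:: a; b; c; d; e] -> In v [:: q0; q1; q2; q3; q4]) ->
  (forall v, In v [:: q0; q1; q2; q3; q4] -> In v [:: a; b; c; d; e]) ->
  False.
Proof.
move=> Hp Hn H1 H2.
have := H1 e. simpl. move=> /(_ (or_intror (or_intror (or_intror (or_intror (or_introl erefl)))))).
case=> [E|[E|[E|[E|[E|[]]]]]].
- subst q0. exact: (pent_false Hb Hp Hn Hnd' H1 H2 Hud Hue).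
- have [Hp' [Hn' [H1' H2']]] := cfg_rot Hp Hn H1 H2. subst q1.
  exact: (pent_false Hb Hp' Hn' Hnd' H1' H2' Hud Hue).
- have [Hp' [Hn' [H1' H2']]] := cfg_rot Hp Hn H1 H2.
  have [Hp'' [Hn'' [H1'' H2'']]] := cfg_rot Hp' Hn' H1' H2'. subst q2.
  exact: (pent_false Hb Hp'' Hn'' Hnd' H1'' H2'' Hud Hue).
- have [Hp' [Hn' [H1' H2']]] := cfg_rot Hp Hn H1 H2.
  have [Hp'' [Hn'' [H1'' H2'']]] := cfg_rot Hp' Hn' H1' H2'.
  have [Hp3 [Hn3 [H13 H23]]] := cfg_rot Hp'' Hn'' H1'' H2''. subst q3.
  exact: (pent_false Hb Hp3 Hn3 Hnd' H13 H23 Hud Hue).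
- have [Hp' [Hn' [H1' H2']]] := cfg_rot Hp Hn H1 H2.
  have [Hp'' [Hn'' [H1'' H2'']]] := cfg_rot Hp' Hn' H1' H2'.
  have [Hp3 [Hn3 [H13 H23]]] := cfg_rot Hp'' Hn'' H1'' H2''.
  have [Hp4 [Hn4 [H14 H24]]] := cfg_rot Hp3 Hn3 H13 H23. subst q4.
  exact: (pent_false Hb Hp4 Hn4 Hnd' H14 H24 Hud Hue).
Qed.

Arguments final5 {X N P G V ang a b c d e q0 q1 q2 q3 q4} Hb Hnd' {ud} Hud {ue} Hue.

Theorem mainTheorem8 :
  forall (T : finType) (g : corner T -> corner T) (ang : corner T -> R)
         (p : 'I_5 -> R) (a b c d e : R),
    sphere_pentagon_tiling g ->
    angle_assignment g ang ->
    angle_congruent ang p ->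
    NoDup (a :: b :: c :: d :: e :: nil) ->
    Permutation (a :: b :: c :: d :: e :: nil) (map p (enum 'I_5)) ->
    (forall x : corner T,
       Permutation (vertex_angles g ang x) (a :: b :: c :: nil) \/
       Permutation (vertex_angles g ang x) (d :: d :: d :: nil) \/
       Permutation (vertex_angles g ang x) (d :: e :: e :: e :: nil)) ->
    ~ (exists x : corner T,
         Permutation (vertex_angles g ang x) (d :: e :: e :: e :: nil)).
Proof.
move=> T g ang p a b c d e Htil Hang Hcong Hnd Hperm Hvt [x0 Hx0].
case: Htil => Hinv _ _ _ _.
have [m01 [m02 [m03 [m04 [m12 [m13 [m14 [m23 [m24 m34]]]]]]]]] := nodup5 _ _ _ _ _ Hnd.
have Hnd3 : NoDup [:: a; b; c].
  apply NoDup_cons_iff in Hnd as [n1 Hnd]. apply NoDup_cons_iff in Hnd as [n2 Hnd].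
  apply NoDup_cons_iff in Hnd as [n3 Hnd]. simpl in n1, n2, n3.
  constructor; first by simpl; tauto.
  constructor; first by simpl; tauto.
  constructor; first by []. constructor.
have ginj : injective g.
  move=> u v E. by rewrite -(proj1 (Hinv u)) E (proj1 (Hinv v)).
have Vinj : injective (vrot g).
  move=> u v E. apply: ginj.
  have E1 := f_equal fst E. have E2 := f_equal snd E.
  apply: injective_projections; first exact: E1.
  exact: (@ordS_inj 5 _ _ E2).
have Hb : base (@fnext T) (@fprev T) g (vrot g) ang (fun v => v = a \/ v = b \/ v = c) d e.
  split.
  - move=> [t i]. by rewrite /fnext /fprev /= ord_predK.
  - move=> [t i]. by rewrite /fnext /fprev /= ordSK.
  - move=> u. exact: (proj1 (Hinv u)).
  - by [].
  - exact: N5.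
  - move=> [E|[E|E]]; [exact: (m03 (esym E))|exact: (m13 (esym E))|exact: (m23 (esym E))].
  - move=> [E|[E|E]]; [exact: (m04 (esym E))|exact: (m14 (esym E))|exact: (m24 (esym E))].
  - exact: m34.
  - move=> u.
    have Hs := size_orbit (vrot g) u.
    have Hio := iter_order Vinj u.
    case: (Hvt u) => [H1|[H1|H1]]; have Hl := Permutation_length H1;
      rewrite length_size /vertex_angles size_map Hs /= in Hl;
      rewrite /vertex_angles /orbit Hl /= in H1; rewrite Hl /= in Hio.
    + left. split; first exact: Hio. exact: (perm3A _ _ _ _ _ _ Hnd3 H1).
    + right; left. split; first exact: Hio. exact: (perm3d _ _ _ _ H1).
    + right; right. split; first exact: Hio. exact: (perm4 _ _ _ _ _ _ m34 H1).
have Hp := pent_conc _ _ _ Hcong.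
rewrite enum5 in Hperm.
have Hs1 : forall v, In v [:: a; b; c; d; e] -> In v [:: qv p 0; qv p 1; qv p 2; qv p 3; qv p 4] :=
  fun v => Permutation_in v Hperm.
have Hs2 : forall v, In v [:: qv p 0; qv p 1; qv p 2; qv p 3; qv p 4] -> In v [:: a; b; c; d; e] :=
  fun v => Permutation_in v (Permutation_sym Hperm).
have Hnq := Permutation_NoDup Hperm Hnd.
have [ud Hud] : exists u, ang u = d.
  have := Permutation_in d (Permutation_sym Hx0) (or_introl erefl).
  rewrite /vertex_angles. exact: In_map_seq.
have [ue Hue] : exists u, ang u = e.
  have := Permutation_in e (Permutation_sym Hx0) (or_intror (or_introl erefl)).
  rewrite /vertex_angles. exact: In_map_seq.
exact: (final5 Hb Hnd Hud Hue Hp Hnq Hs1 Hs2).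
Qed.
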